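(* Fix $\varepsilon\in\{1,-1\}$ and $m\in\mathbb{R}$. Let $I\subset\mathbb{R}$ be an open interval, $A:I\to\mathrm{SL}(2,\mathbb{C})$ and $h:I\to\mathbb{R}$ smooth maps, and let $y:I\to Y$, $y(s)=(A(s);h(s),h'(s),h''(s))$. Then $y$ is an integral curve of the Euler--Lagrange system $(\mathcal{J},\omega)$ with $y^{\ast}\omega=ds$ if and only if \[ A^{-1}A' = H(h) \quad\text{and}\quad \frac{d}{ds}\,U(h,h',h'') = \left[\,U(h,h',h''),\,H(h)\,\right] \quad\text{on } I . \]
   Context: For $h\in\mathbb{R}$ put $H(h)=\begin{pmatrix}0&\varepsilon\\ 2\varepsilon h+\frac{m}{3}+i&0\end{pmatrix}\in\mathfrak{sl}(2,\mathbb{C})$, and for $(h,h_1,h_2)\in\mathbb{R}^3$ put \[ U(h,h_1,h_2)=\begin{pmatrix} i h_1 & 2i\varepsilon\left(h-\varepsilon\left(\frac{m}{3}+i\right)\right)\\[2pt] 2\left(h+\frac{2\varepsilon m}{3}\right)-i\varepsilon\left(h_2-4h^2+\frac{2\varepsilon m h}{3}+\frac{2m^2}{9}-2\right) & -ih_1\end{pmatrix}. \] The momentum space is $Y=\mathrm{SL}(2,\mathbb{C})\times\mathbb{R}^3$ with coordinates $(A;h,h_1,h_2)$. Write the Maurer--Cartan form of $\mathrm{SL}(2,\mathbb{C})$ (pulled back to $Y$) as $A^{-1}dA=\alpha+i\beta$ with $\alpha=\begin{pmatrix}\alpha^1_1&\alpha^1_2\\ \alpha^2_1&-\alpha^1_1\end{pmatrix}$,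 $\beta=\begin{pmatrix}\beta^1_1&\beta^1_2\\ \beta^2_1&-\beta^1_1\end{pmatrix}$ real-valued. Let $\omega=\beta^2_1$. The Euler--Lagrange system $(\mathcal{J},\omega)$ is the Pfaffian system on $Y$ generated by the 1-forms $\beta^1_1$, $\beta^1_2$, $\alpha^1_1$, $\alpha^1_2-\varepsilon\omega$, $\alpha^2_1-(2\varepsilon h+\frac{m}{3})\omega$, $dh-h_1\omega$, $dh_1-h_2\omega$, $dh_2-12hh_1\omega$, with independence condition $\omega\neq0$. An integral curve is a smooth curve $y$ in $Y$ on which all these generators pull back to zero and $y^\ast\omega$ vanishes nowhere. (These integral curves correspond to extremals of the functional $\int(m+k)\omega$ on null curves in de Sitter 3-space, with $h=\frac{\varepsilon}{2}(k-\frac{m}{3})$.) *)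

(* Defs.v *)
From Stdlib Require Import Reals.
From Coquelicot Require Import Coquelicot.
Open Scope R_scope.

Definition nonempty_open_interval (a b : Rbar) : Prop := Rbar_lt a b.
Definition in_I (a b : Rbar) (s : R) : Prop := Rbar_lt a s /\ Rbar_lt s b.

Definition smooth_on (a b : Rbar) (f : R -> R) : Prop :=
  forall (n : nat) (s : R), in_I a b s -> ex_derive_n f n s.

Record M2 := mkM2 { m11 : C; m12 : C; m21 : C; m22 : C }.

Definition M2det (X : M2) : C := Cminus (Cmult (m11 X) (m22 X)) (Cmult (m12 X) (m21 X)).
Definition M2mul (X Y : M2) : M2 :=
  mkM2 (Cplus (Cmult (m11 X) (m11 Y)) (Cmult (m12 X) (m21 Y)))
       (Cplus (Cmult (m11 X) (m12 Y)) (Cmult (m12 X) (m22 Y)))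
       (Cplus (Cmult (m21 X) (m11 Y)) (Cmult (m22 X) (m21 Y)))
       (Cplus (Cmult (m21 X) (m12 Y)) (Cmult (m22 X) (m22 Y))).
Definition M2sub (X Y : M2) : M2 :=
  mkM2 (Cminus (m11 X) (m11 Y)) (Cminus (m12 X) (m12 Y))
       (Cminus (m21 X) (m21 Y)) (Cminus (m22 X) (m22 Y)).
Definition M2inv (X : M2) : M2 :=
  let d := Cinv (M2det X) in
  mkM2 (Cmult d (m22 X)) (Cmult d (Copp (m12 X)))
       (Cmult d (Copp (m21 X))) (Cmult d (m11 X)).
Definition M2bracket (X Y : M2) : M2 := M2sub (M2mul X Y) (M2mul Y X).

Definition CDerive (f : R -> C) (s : R) : C :=
  (Derive (fun t => fst (f t)) s, Derive (fun t => snd (f t)) s).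
Definition M2Derive (A : R -> M2) (s : R) : M2 :=
  mkM2 (CDerive (fun t => m11 (A t)) s) (CDerive (fun t => m12 (A t)) s)
       (CDerive (fun t => m21 (A t)) s) (CDerive (fun t => m22 (A t)) s).

Definition smoothC_on (a b : Rbar) (f : R -> C) : Prop :=
  smooth_on a b (fun t => fst (f t)) /\ smooth_on a b (fun t => snd (f t)).
Definition smoothM2_on (a b : Rbar) (A : R -> M2) : Prop :=
  smoothC_on a b (fun t => m11 (A t)) /\ smoothC_on a b (fun t => m12 (A t)) /\
  smoothC_on a b (fun t => m21 (A t)) /\ smoothC_on a b (fun t => m22 (A t)).

(* pullback of the Maurer-Cartan form A^{-1} dA along the curve: A(s)^{-1} A'(s) ds;
   alpha = Re, beta = Im (entrywise). *)
Definition MC (A : R -> M2) (s : R) : M2 := M2mul (M2inv (A s)) (M2Derive A s).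

Definition Hmat (eps m h : R) : M2 :=
  mkM2 (RtoC 0) (RtoC eps) (Cplus (RtoC (2 * eps * h + m / 3)) Ci) (RtoC 0).

Definition Umat (eps m h h1 h2 : R) : M2 :=
  mkM2 (Cmult Ci (RtoC h1))
       (Cmult (Cmult (RtoC 2) (Cmult Ci (RtoC eps)))
              (Cminus (RtoC h) (Cmult (RtoC eps) (Cplus (RtoC (m / 3)) Ci))))
       (Cminus (RtoC (2 * (h + 2 * eps * m / 3)))
               (Cmult (Cmult Ci (RtoC eps))
                      (RtoC (h2 - 4 * h ^ 2 + 2 * eps * m * h / 3 + 2 * m ^ 2 / 9 - 2))))
       (Copp (Cmult Ci (RtoC h1))).

(* A curve y(s) = (A(s); h(s), h1(s), h2(s)) in Y = SL(2,C) x R^3, defined on ]a,b[,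
   is an integral curve of the Euler-Lagrange system (J, omega): y is smooth, takes
   values in Y, all generators of J pull back to zero and y^* omega vanishes nowhere.
   The pullback of a 1-form along y is written as its coefficient of ds. *)
Definition integral_curve (eps m : R) (a b : Rbar)
    (A : R -> M2) (h h1 h2 : R -> R) : Prop :=
  smoothM2_on a b A /\ smooth_on a b h /\ smooth_on a b h1 /\ smooth_on a b h2 /\
  forall s, in_I a b s ->
    let X := MC A s in
    let omega := snd (m21 X) in                     (* y^* beta^2_1 *)
    M2det (A s) = RtoC 1 /\
    snd (m11 X) = 0 /\
    snd (m12 X) = 0 /\
    fst (m11 X) = 0 /\
    fst (m12 X) - eps * omega = 0 /\
    fst (m21 X) - (2 * eps * h s + m / 3) * omega = 0 /\
    Derive h s - h1 s * omega = 0 /\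
    Derive h1 s - h2 s * omega = 0 /\
    Derive h2 s - 12 * h s * h1 s * omega = 0 /\
    omega <> 0.

(* Main.v *)
Require Import Defs.
From Stdlib Require Import Reals Lra Lia.
From Coquelicot Require Import Coquelicot.
Open Scope R_scope.

Ltac setD f s := let D := fresh "D" in set (D := Derive f s).

Lemma UD eps m (p q r : R -> R) s : ex_derive p s -> ex_derive q s -> ex_derive r s ->
  M2Derive (fun t => Umat eps m (p t) (q t) (r t)) s =
  mkM2 (0, Derive q s) (0, 2*eps*Derive p s)
   (2*Derive p s, -eps*(Derive r s - 8 * p s * Derive p s + 2*eps*m*Derive p s/3)) (0, - Derive q s).
Proof.
intros Hp Hq Hr.
unfold M2Derive, CDerive; f_equal; f_equal; apply is_derive_unique;
unfold Umat, Cminus, Cmult, Cplus, Copp, RtoC, Ci; cbn [fst snd m11 m12 m21 m22 Umat];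
auto_derive; repeat split; try assumption.
all: set (Dp := Derive p s); set (Dq := Derive q s); set (Dr := Derive r s).
all: unfold Rdiv; ring.
Qed.

Lemma gen_r (f1 f2 f3 f4 f5 f6 f7 f8 : R -> R) s :
  ex_derive f1 s -> ex_derive f2 s -> ex_derive f3 s -> ex_derive f4 s ->
  ex_derive f5 s -> ex_derive f6 s -> ex_derive f7 s -> ex_derive f8 s ->
  is_derive (fun t => f1 t * f7 t - f2 t * f8 t + - (f3 t * f5 t - f4 t * f6 t)) s
   (Derive f1 s * f7 s + f1 s * Derive f7 s - Derive f2 s * f8 s - f2 s * Derive f8 s
    - (Derive f3 s * f5 s + f3 s * Derive f5 s - Derive f4 s * f6 s - f4 s * Derive f6 s)).
Proof.
intros. auto_derive; repeat split; try assumption.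
setD f1 s; setD f2 s; setD f3 s; setD f4 s; setD f5 s; setD f6 s; setD f7 s; setD f8 s.
ring.
Qed.

Lemma gen_i (f1 f2 f3 f4 f5 f6 f7 f8 : R -> R) s :
  ex_derive f1 s -> ex_derive f2 s -> ex_derive f3 s -> ex_derive f4 s ->
  ex_derive f5 s -> ex_derive f6 s -> ex_derive f7 s -> ex_derive f8 s ->
  is_derive (fun t => f1 t * f8 t + f2 t * f7 t + - (f3 t * f6 t + f4 t * f5 t)) s
   (Derive f1 s * f8 s + f1 s * Derive f8 s + Derive f2 s * f7 s + f2 s * Derive f7 s
    - (Derive f3 s * f6 s + f3 s * Derive f6 s + Derive f4 s * f5 s + f4 s * Derive f5 s)).
Proof.
intros. auto_derive; repeat split; try assumption.
setD f1 s; setD f2 s; setD f3 s; setD f4 s; setD f5 s; setD f6 s; setD f7 s; setD f8 s.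
ring.
Qed.

Definition smoothA_pt (A : R -> M2) s :=
  ex_derive (fun t => fst (m11 (A t))) s /\ ex_derive (fun t => snd (m11 (A t))) s /\
  ex_derive (fun t => fst (m12 (A t))) s /\ ex_derive (fun t => snd (m12 (A t))) s /\
  ex_derive (fun t => fst (m21 (A t))) s /\ ex_derive (fun t => snd (m21 (A t))) s /\
  ex_derive (fun t => fst (m22 (A t))) s /\ ex_derive (fun t => snd (m22 (A t))) s.

Lemma detDr A s : smoothA_pt A s ->
  Derive (fun t => fst (M2det (A t))) s =
  (Derive (fun t => fst (m11 (A t))) s * fst (m22 (A s)) + fst (m11 (A s)) * Derive (fun t => fst (m22 (A t))) s
   - Derive (fun t => snd (m11 (A t))) s * snd (m22 (A s)) - snd (m11 (A s)) * Derive (fun t => snd (m22 (A t))) s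
    - (Derive (fun t => fst (m12 (A t))) s * fst (m21 (A s)) + fst (m12 (A s)) * Derive (fun t => fst (m21 (A t))) s
       - Derive (fun t => snd (m12 (A t))) s * snd (m21 (A s)) - snd (m12 (A s)) * Derive (fun t => snd (m21 (A t))) s)).
Proof.
intros (H1&H2&H3&H4&H5&H6&H7&H8). apply is_derive_unique.
exact (gen_r _ _ _ _ _ _ _ _ s H1 H2 H3 H4 H5 H6 H7 H8).
Qed.

Lemma detDi A s : smoothA_pt A s ->
  Derive (fun t => snd (M2det (A t))) s =
  (Derive (fun t => fst (m11 (A t))) s * snd (m22 (A s)) + fst (m11 (A s)) * Derive (fun t => snd (m22 (A t))) s
   + Derive (fun t => snd (m11 (A t))) s * fst (m22 (A s)) + snd (m11 (A s)) * Derive (fun t => fst (m22 (A t))) s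
    - (Derive (fun t => fst (m12 (A t))) s * snd (m21 (A s)) + fst (m12 (A s)) * Derive (fun t => snd (m21 (A t))) s
       + Derive (fun t => snd (m12 (A t))) s * fst (m21 (A s)) + snd (m12 (A s)) * Derive (fun t => fst (m21 (A t))) s)).
Proof.
intros (H1&H2&H3&H4&H5&H6&H7&H8). apply is_derive_unique.
exact (gen_i _ _ _ _ _ _ _ _ s H1 H2 H3 H4 H5 H6 H7 H8).
Qed.

Lemma Cinv1 : Cinv (RtoC 1) = RtoC 1.
Proof. unfold Cinv, RtoC; simpl; f_equal; field. Qed.

Lemma trace0 A s : smoothA_pt A s -> M2det (A s) = RtoC 1 ->
  Derive (fun t => fst (M2det (A t))) s = 0 ->
  Derive (fun t => snd (M2det (A t))) s = 0 ->
  fst (m22 (MC A s)) = - fst (m11 (MC A s)) /\ snd (m22 (MC A s)) = - snd (m11 (MC A s)).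
Proof.
intros HA Hd Dr Di. rewrite (detDr A s HA) in Dr. rewrite (detDi A s HA) in Di.
unfold MC, M2mul, M2inv. rewrite Hd, Cinv1. unfold M2Derive, CDerive.
unfold Cplus, Cmult, Copp, RtoC; cbn [fst snd m11 m12 m21 m22].
split; lra.
Qed.

Lemma sm_ex a b f s : smooth_on a b f -> in_I a b s -> ex_derive f s.
Proof. intros H Hs. exact (H 1%nat s Hs). Qed.

Lemma smD a b f : smooth_on a b f -> smooth_on a b (Derive f).
Proof.
intros H n s Hs. destruct n as [|n]; [exact I|].
specialize (H (S (S n)) s Hs). simpl in H |- *.
apply (ex_derive_ext (Derive_n f (S n))); [|exact H].
intro t. symmetry. replace (S n) with (n+1)%nat by lia. rewrite <- Derive_n_comp. reflexivity.
Qed.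

Lemma loc_I a b s : in_I a b s -> locally s (fun t => in_I a b t).
Proof.
intros [H1 H2]. apply filter_and; [apply open_Rbar_gt; exact H1 | apply open_Rbar_lt; exact H2].
Qed.

Lemma smA_pt a b A s : smoothM2_on a b A -> in_I a b s -> smoothA_pt A s.
Proof.
intros ([H1 H2]&[H3 H4]&[H5 H6]&[H7 H8]) Hs.
repeat split; eapply sm_ex; eassumption.
Qed.

Lemma det_const a b A s : (forall s, in_I a b s -> M2det (A s) = RtoC 1) -> in_I a b s ->
  Derive (fun t => fst (M2det (A t))) s = 0 /\ Derive (fun t => snd (M2det (A t))) s = 0.
Proof.
intros HA Hs. split.
- rewrite (Derive_ext_loc _ (fun _ => 1)). apply Derive_const.
  apply (filter_imp (fun t => in_I a b t)); [|exact (loc_I a b s Hs)].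
  intros t Ht. rewrite (HA t Ht). reflexivity.
- rewrite (Derive_ext_loc _ (fun _ => 0)). apply Derive_const.
  apply (filter_imp (fun t => in_I a b t)); [|exact (loc_I a b s Hs)].
  intros t Ht. rewrite (HA t Ht). reflexivity.
Qed.

Theorem proposition3p3 (eps m : R) (Heps : eps = 1 \/ eps = -1)
  (a b : Rbar) (HI : nonempty_open_interval a b)
  (A : R -> M2) (h : R -> R)
  (HAsl : forall s, in_I a b s -> M2det (A s) = RtoC 1)
  (HAsm : smoothM2_on a b A) (Hhsm : smooth_on a b h) :
  ( integral_curve eps m a b A h (Derive h) (Derive_n h 2)
    /\ (forall s, in_I a b s -> snd (m21 (MC A s)) = 1) )
  <->
  ( (forall s, in_I a b s -> MC A s = Hmat eps m (h s))
    /\ (forall s, in_I a b s ->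
          M2Derive (fun t => Umat eps m (h t) (Derive h t) (Derive_n h 2 t)) s
          = M2bracket (Umat eps m (h s) (Derive h s) (Derive_n h 2 s)) (Hmat eps m (h s))) ).
Proof.
assert (Hh1 : smooth_on a b (Derive h)) by exact (smD _ _ _ Hhsm).
assert (Hh2 : smooth_on a b (Derive_n h 2)) by exact (smD _ _ _ Hh1).
split.
- intros [[_ [_ [_ [_ HJ]]]] Hom].
  assert (HX : forall s, in_I a b s -> MC A s = Hmat eps m (h s)).
  { intros s Hs. specialize (HJ s Hs). cbv zeta in HJ.
    destruct HJ as (Hd & b11 & b12 & a11 & a12 & a21 & _).
    pose proof (Hom s Hs) as Ho.
    destruct (det_const a b A s HAsl Hs) as [D1 D2].
    destruct (trace0 A s (smA_pt a b A s HAsm Hs) Hd D1 D2) as [T1 T2].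
    revert b11 b12 a11 a12 a21 Ho T1 T2.
    destruct (MC A s) as [[x1 y1] [x2 y2] [x3 y3] [x4 y4]]. cbn [fst snd m11 m12 m21 m22].
    intros. subst y3. unfold Hmat, Cplus, RtoC, Ci. f_equal; f_equal; simpl; lra. }
  split; [exact HX|].
  intros s Hs. specialize (HJ s Hs). cbv zeta in HJ.
  destruct HJ as (_ & _ & _ & _ & _ & _ & _ & _ & H3 & _).
  rewrite (Hom s Hs) in H3.
  rewrite UD by (eapply sm_ex; eassumption).
  change (Derive (Derive h) s) with (Derive_n h 2 s).
  assert (E : Derive (Derive_n h 2) s = 12 * h s * Derive h s) by lra.
  rewrite E.
  unfold M2bracket, M2sub, M2mul, Umat, Hmat, Cminus, Cmult, Cplus, Copp, RtoC, Ci.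
  cbn [fst snd m11 m12 m21 m22].
  destruct Heps; subst eps; f_equal; f_equal; field.
- intros [HX HU]. split.
  + split; [exact HAsm|]. split; [exact Hhsm|]. split; [exact Hh1|]. split; [exact Hh2|].
    intros s Hs. cbv zeta. rewrite (HX s Hs).
    specialize (HU s Hs). rewrite UD in HU by (eapply sm_ex; eassumption).
    apply (f_equal (fun X => snd (m21 X))) in HU.
    unfold M2bracket, M2sub, M2mul, Umat, Hmat, Cminus, Cmult, Cplus, Copp, RtoC, Ci in HU.
    cbn [fst snd m11 m12 m21 m22] in HU.
    unfold Hmat, Cplus, RtoC, Ci. cbn [fst snd m11 m12 m21 m22].
    change (Derive (Derive h) s) with (Derive_n h 2 s).
    split; [exact (HAsl s Hs)|].
    repeat split; try lra.
    destruct Heps; subst eps; nra.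
  + intros s Hs. rewrite (HX s Hs). unfold Hmat, Cplus, RtoC, Ci; cbn [fst snd m21]. ring.
Qed.
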